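(* Let $\nu\in\mathcal P_{2,0}(\mathbb R^d)$ and let $\mathcal D\subset\mathcal P_2(\mathbb R^d)$ be a cone. For every $\mu^*\in\operatorname{argmax}_{\mu\in\mathcal D\cap\mathcal M^K_\nu}\operatorname{Var}(\mu)$ and every $\pi^*\in\operatorname{argmax}_{\pi\in\Pi(\mu^*,\nu)}\int\langle x,y\rangle\,d\pi(x,y)$, $$\int\langle x,y\rangle\,d\pi^*(x,y)=\int|x|^2\,d\mu^*(x).$$ If in addition $\mathcal D$ is translation invariant, then every such $\mu^*$ satisfies $\int x\,d\mu^*(x)=0$.
   Context: $\mathcal P_2(\mathbb R^d)$: Borel probability measures with finite second moment; $\mathcal P_{2,0}$: those with zero mean. $\Pi(\mu,\nu)$: couplings. $\operatorname{Var}(\mu)=\int|x-\int z\,d\mu|^2d\mu$. Kantorovich dominance: $\mu\preceq_K\nu$ iff there is $\pi\in\Pi(\mu,\nu)$ with $\int\langle x-b_\nu,y-x\rangle\,d\pi=0$, $b_\nu=\int y\,d\nu$; $\mathcal M^K_\nu=\{\mu\in\mathcal P_2(\mathbb R^d):\mu\preceq_K\nu\}$. The dilation $\lambda_\#\mu$ is the law of $\lambda X$, $X\sim\mu$. $\mathcal D$ is a cone if $\lambda_\#\mu\in\mathcal D$ for all $\mu\in\mathcal D$, $\lambda\ge0$; translation invariant if $(T_k)_\#\mu\in\mathcal D$ for all $\mu\in\mathcal D$, $k\in\mathbb R^d$, where $T_k(x)=x+k$. *)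

(* Defs.v *)
(* R^d is modelled as [n.-tuple R] with its
   canonical product (= Borel) sigma-algebra from measurable_structure.v. *)
From HB Require Import structures.
From mathcomp Require Import all_boot all_order all_algebra.
From mathcomp Require Import all_classical all_reals all_analysis.
Set Implicit Arguments. Unset Strict Implicit. Unset Printing Implicit Defensive.
Import Order.TTheory GRing.Theory Num.Theory.
Local Open Scope classical_set_scope.
Local Open Scope ring_scope.

Section defs.
Context {R : realType} {n : nat}.

Notation Rd := (n.-tuple R).

Definition dotv (x y : Rd) : R := \sum_(i < n) tnth x i * tnth y i.
Definition sqnorm (x : Rd) : R := dotv x x.

Definition P2 (mu : probability Rd R) : Prop :=
  (\int[mu]_x (sqnorm x)%:E < +oo)%E.

Definition mean (mu : probability Rd R) : Rd :=
  [tuple fine (\int[mu]_x (tnth x i)%:E) | i < n].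

Definition Var (mu : probability Rd R) : \bar R :=
  (\int[mu]_x (\sum_(i < n) (tnth x i - tnth (mean mu) i) ^+ 2)%:E)%E.

Definition coupling (mu nu : probability Rd R)
    (pi : probability (Rd * Rd)%type R) : Prop :=
  (forall A : set Rd, measurable A -> pi (fst @^-1` A) = mu A) /\
  (forall A : set Rd, measurable A -> pi (snd @^-1` A) = nu A).

Definition corr (pi : probability (Rd * Rd)%type R) : \bar R :=
  (\int[pi]_z (dotv z.1 z.2)%:E)%E.

Definition Kdom (mu nu : probability Rd R) : Prop :=
  exists pi, coupling mu nu pi /\
    (\int[pi]_z (\sum_(i < n) (tnth z.1 i - tnth (mean nu) i)
                              * (tnth z.2 i - tnth z.1 i))%:E = 0)%E.

Definition MK (nu : probability Rd R) : set (probability Rd R) :=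
  [set mu | P2 mu /\ Kdom mu nu].

Definition is_image (f : Rd -> Rd) (mu mu' : probability Rd R) : Prop :=
  forall A : set Rd, measurable A -> mu' A = mu (f @^-1` A).

Definition dilate (l : R) (x : Rd) : Rd := [tuple l * tnth x i | i < n].
Definition translate (k x : Rd) : Rd := [tuple tnth x i + tnth k i | i < n].

Definition is_cone (D : set (probability Rd R)) : Prop :=
  forall mu mu' l, D mu -> 0 <= l -> is_image (dilate l) mu mu' -> D mu'.

Definition transl_inv (D : set (probability Rd R)) : Prop :=
  forall mu mu' k, D mu -> is_image (translate k) mu mu' -> D mu'.

End defs.

(* Main.v *)
Require Import Defs.
From HB Require Import structures.
From mathcomp Require Import all_boot all_order all_algebra.
From mathcomp Require Import all_classical all_reals all_analysis.
From mathcomp Require Import measurable_realfun ring lra.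
Set Implicit Arguments. Unset Strict Implicit. Unset Printing Implicit Defensive.
Import Order.TTheory GRing.Theory Num.Theory.
Local Open Scope classical_set_scope.
Local Open Scope ring_scope.
Section gen.
Context d (T : measurableType d) (R : realType).
Implicit Types (mu : {measure set T -> \bar R}) (f g : T -> R).

Definition Int mu f := mu.-integrable setT (EFin \o f).
Definition I mu f := fine (\int[mu]_x (f x)%:E)%E.

Lemma IntE mu f : Int mu f -> (\int[mu]_x (f x)%:E)%E = (I mu f)%:E.
Proof. by move=> h; rewrite /I fineK //; exact: integrable_fin_num h. Qed.

Lemma Int_meas mu f : Int mu f -> measurable_fun setT f.
Proof. by move=> /measurable_int /measurable_EFinP. Qed.

Lemma IntD mu f g : Int mu f -> Int mu g -> Int mu (fun x => f x + g x).
Proof.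
move=> hf hg; apply: eq_integrable (integrableD _ hf hg) => //.
Qed.

Lemma ID mu f g : Int mu f -> Int mu g ->
  I mu (fun x => f x + g x) = I mu f + I mu g.
Proof.
move=> hf hg; apply: EFin_inj; rewrite -IntE; last exact: IntD.
rewrite EFinD -!IntE //.
rewrite -integralD //.
Qed.

Lemma IntZ mu k f : Int mu f -> Int mu (fun x => k * f x).
Proof.
move=> hf; apply: eq_integrable (integrableZl _ k hf) => //.
Qed.

Lemma IZ mu k f : Int mu f -> I mu (fun x => k * f x) = k * I mu f.
Proof.
move=> hf; apply: EFin_inj; rewrite -IntE; last exact: IntZ.
rewrite EFinM -IntE // -integralZl //.
Qed.

Lemma IntB mu f g : Int mu f -> Int mu g -> Int mu (fun x => f x - g x).
Proof.
move=> hf hg; have := IntD hf (IntZ (-1) hg).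
by apply: (eq_integrable measurableT) => x _ /=; rewrite mulN1r.
Qed.

Lemma IB mu f g : Int mu f -> Int mu g ->
  I mu (fun x => f x - g x) = I mu f - I mu g.
Proof.
move=> hf hg; rewrite (_ : (fun x => f x - g x) = (fun x => f x + (-1) * g x)).
  by rewrite ID ?IZ ?mulN1r //; exact: IntZ.
by apply: funext => x; rewrite mulN1r.
Qed.

Lemma Int_sum mu n (F : 'I_n -> T -> R) : (forall i, Int mu (F i)) ->
  Int mu (fun x => \sum_(i < n) F i x).
Proof.
move=> h; have := @integrable_sum _ _ _ mu _ measurableT _ (index_enum _) predT (fun i => EFin \o F i) (fun i _ => h i).
by apply: (eq_integrable measurableT) => x _ /=; rewrite sumEFin.
Qed.

Lemma I_sum mu n (F : 'I_n -> T -> R) : (forall i, Int mu (F i)) ->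
  I mu (fun x => \sum_(i < n) F i x) = \sum_(i < n) I mu (F i).
Proof.
move=> h; apply: EFin_inj; rewrite -IntE; last exact: Int_sum.
rewrite -sumEFin; under eq_bigr do rewrite -IntE //.
rewrite -integral_sum //; apply: eq_integral => x _; by rewrite sumEFin.
Qed.


Lemma Ile mu f g : Int mu f -> Int mu g -> (forall x, f x <= g x) ->
  I mu f <= I mu g.
Proof.
move=> hf hg h; rewrite -lee_fin -!IntE //; apply: le_integral => //.
by move=> x _; rewrite lee_fin.
Qed.

Lemma I_ge0 mu f : (forall x, 0 <= f x) -> 0 <= I mu f.
Proof.
by move=> h; apply: fine_ge0; apply: integral_ge0 => x _; rewrite lee_fin.
Qed.

Lemma Int_ge0 mu f : measurable_fun setT f -> (forall x, 0 <= f x) ->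
  (\int[mu]_x (f x)%:E < +oo)%E -> Int mu f.
Proof.
move=> mf h hlt; apply/integrableP; split; first exact/measurable_EFinP.
by under eq_integral do rewrite abse_EFin ger0_norm //.
Qed.

End gen.

Section prob.
Context d (T : measurableType d) (R : realType) (P : probability T R).


End prob.

Section prob2.
Context d (T : measurableType d) (R : realType) (P : probability T R).

Lemma PsetT : (P [set: T] = 1)%E.
Proof. exact: probability_setT. Qed.

Lemma I_cst (c : R) : I P (fun _ => c) = c.
Proof.
rewrite /I (integral_cst P measurableT c%:E).
transitivity (fine (c%:E * 1%E)); last by rewrite mule1.
by congr (fine (_ * _)); exact: probability_setT.
Qed.

Lemma Int_cst (c : R) : Int P (fun _ => c).
Proof. exact: finite_measure_integrable_cst. Qed.
End prob2.

Section gen2.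
Context d (T : measurableType d) (R : realType).
Implicit Types (mu : {measure set T -> \bar R}) (f g : T -> R).
Lemma Int_le mu f g : measurable_fun setT f -> (forall x, `|f x| <= g x) ->
  Int mu g -> Int mu f.
Proof.
move=> mf h hg; apply: le_integrable hg => //.
  exact/measurable_EFinP.
move=> x _ /=; rewrite lee_fin (le_trans (h x)) //.
exact: ler_norm.
Qed.
End gen2.

Section transfer.
Context d d' (T : measurableType d) (T' : measurableType d') (R : realType).
Variables (m1 : {measure set T -> \bar R}) (m2 : {measure set T' -> \bar R}).
Variable phi : T -> T'.
Hypothesis mphi : measurable_fun setT phi.
Hypothesis hm : forall A, measurable A -> m2 A = m1 (phi @^-1` A).

Lemma ge0_transfer (h : T' -> \bar R) : measurable_fun setT h ->
  (forall y, (0 <= h y)%E) -> (\int[m2]_y h y = \int[m1]_x h (phi x))%E.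
Proof.
move=> mh h0.
rewrite (eq_measure_integral (pushforward m1 phi)); last first.
  by move=> A mA _; exact: hm.
rewrite ge0_integral_pushforward //; try (by move=> y _; exact: h0).
all: by rewrite ?preimage_setT.
Qed.

Lemma Int_transfer (g : T' -> R) : measurable_fun setT g ->
  Int m1 (g \o phi) <-> Int m2 g.
Proof.
move=> mg; rewrite /Int; split => /integrableP [mf fi]; apply/integrableP.
  split; first exact/measurable_EFinP.
  rewrite (ge0_transfer (h := fun y => `|(g y)%:E|%E)) //.
  by apply: measurableT_comp => //; exact/measurable_EFinP.
split; first by apply/measurable_EFinP; exact: measurableT_comp.
rewrite -(ge0_transfer (h := fun y => `|(g y)%:E|%E)) //.
  by apply: measurableT_comp => //; exact/measurable_EFinP.
Qed.

Lemma I_transfer (g : T' -> R) : measurable_fun setT g -> Int m1 (g \o phi) ->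
  I m2 g = I m1 (g \o phi).
Proof.
move=> mg hi; rewrite /I.
rewrite (eq_measure_integral (pushforward m1 phi)); last first.
  by move=> A mA _; exact: hm.
rewrite integral_pushforward //; try exact/measurable_EFinP.
all: by rewrite ?preimage_setT.
Qed.
End transfer.
Section meas.
Context {R : realType} {n : nat}.
Notation Rd := (n.-tuple R).

Lemma mtn (i : 'I_n) : measurable_fun setT (fun x : Rd => tnth x i).
Proof. exact: measurable_tnth. Qed.

Lemma mtn1 (i : 'I_n) : measurable_fun setT (fun z : Rd * Rd => tnth z.1 i).
Proof. exact: (measurableT_comp (mtn i) measurable_fst). Qed.

Lemma mtn2 (i : 'I_n) : measurable_fun setT (fun z : Rd * Rd => tnth z.2 i).
Proof. exact: (measurableT_comp (mtn i) measurable_snd). Qed.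

Lemma msqnorm : measurable_fun setT (@sqnorm R n).
Proof.
rewrite /sqnorm /dotv; apply: measurable_sum => i.
by apply: measurable_funM; exact: mtn.
Qed.

Lemma mdot : measurable_fun setT (fun z : Rd * Rd => dotv z.1 z.2).
Proof.
rewrite /dotv; apply: measurable_sum => i.
by apply: measurable_funM; [exact: mtn1|exact: mtn2].
Qed.

Lemma mdilate (l : R) : measurable_fun setT (@dilate R n l).
Proof.
apply/measurable_fun_tnthP => i.
rewrite (_ : _ \o _ = fun x => l * tnth x i); last first.
  by apply: funext => x /=; rewrite tnth_mktuple.
by apply: measurable_funM => //; exact: mtn.
Qed.

Lemma mtranslate (k : Rd) : measurable_fun setT (@translate R n k).
Proof.
apply/measurable_fun_tnthP => i.
rewrite (_ : _ \o _ = fun x => tnth x i + tnth k i); last first.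
  by apply: funext => x /=; rewrite tnth_mktuple.
by apply: measurable_funD => //; exact: mtn.
Qed.

HB.instance Definition _ (l : R) :=
  isMeasurableFun.Build _ _ _ _ (@dilate R n l) (mdilate l).
HB.instance Definition _ (k : Rd) :=
  isMeasurableFun.Build _ _ _ _ (@translate R n k) (mtranslate k).

Definition lift1 (f : Rd -> Rd) (z : Rd * Rd) : Rd * Rd := (f z.1, z.2).

Lemma mlift1 (f : {mfun Rd >-> Rd}) : measurable_fun setT (lift1 f).
Proof.
apply: measurable_fun_pair => //.
exact: (measurableT_comp (measurable_funPT f) measurable_fst).
Qed.

HB.instance Definition _ (f : {mfun Rd >-> Rd}) :=
  isMeasurableFun.Build _ _ _ _ (lift1 f) (mlift1 f).

End meas.

Section mom.
Context {R : realType} {n : nat}.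
Notation Rd := (n.-tuple R).
Implicit Types (mu nu : probability Rd R) (pi : probability (Rd * Rd)%type R).

Definition E mu i := I mu (fun x : Rd => tnth x i).
Definition S mu i := I mu (fun x : Rd => tnth x i ^+ 2).
Definition C pi i := I pi (fun z : Rd * Rd => tnth z.1 i * tnth z.2 i).
Definition VarR mu := \sum_(i < n) (S mu i - E mu i ^+ 2).

Lemma sqnormE (x : Rd) : sqnorm x = \sum_(i < n) tnth x i ^+ 2.
Proof. by rewrite /sqnorm /dotv; apply: eq_bigr => i _; rewrite expr2. Qed.

Lemma sq_le_sqnorm (x : Rd) i : tnth x i ^+ 2 <= sqnorm x.
Proof.
rewrite sqnormE (bigD1 i) //= lerDl; apply: sumr_ge0 => j _.
exact: sqr_ge0.
Qed.

Lemma sqnorm_ge0 (x : Rd) : 0 <= sqnorm x.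
Proof. rewrite sqnormE; apply: sumr_ge0 => j _; exact: sqr_ge0. Qed.

Lemma P2_Int mu : P2 mu -> Int mu sqnorm.
Proof.
move=> h; apply: Int_ge0 => //; [exact: msqnorm|exact: sqnorm_ge0].
Qed.

Lemma P2_S mu i : P2 mu -> Int mu (fun x : Rd => tnth x i ^+ 2).
Proof.
move=> /P2_Int h; apply: Int_le h.
  by apply: measurable_funX; exact: mtn.
move=> x; rewrite ger0_norm ?sqr_ge0 //; exact: sq_le_sqnorm.
Qed.

Lemma P2_E mu i : P2 mu -> Int mu (fun x : Rd => tnth x i).
Proof.
move=> h.
have hg : Int mu (fun x : Rd => 1 + tnth x i ^+ 2).
  by apply: IntD; [exact: Int_cst|exact: P2_S].
apply: (Int_le (mtn i) _ hg).
move=> x; set t := tnth x i.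
have : `|t| ^+ 2 = t ^+ 2 by rewrite real_normK // num_real.
have : 0 <= `|t| by [].
move: (`|t|) => a; nra.
Qed.

Lemma m2_sum mu : P2 mu -> I mu sqnorm = \sum_(i < n) S mu i.
Proof.
move=> h; rewrite (_ : sqnorm = fun x => \sum_(i < n) tnth x i ^+ 2).
  by rewrite I_sum // => i; exact: P2_S.
by apply: funext => x; rewrite sqnormE.
Qed.

Lemma S_ge0 mu i : 0 <= S mu i.
Proof. by apply: I_ge0 => x; exact: sqr_ge0. Qed.

Lemma quad mu i a b c : P2 mu ->
  Int mu (fun x : Rd => a * tnth x i ^+ 2 + b * tnth x i + c) /\
  I mu (fun x : Rd => a * tnth x i ^+ 2 + b * tnth x i + c) =
    a * S mu i + b * E mu i + c.
Proof.
move=> h.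
have h1 := IntZ a (P2_S i h); have h2 := IntZ b (P2_E i h).
have h3 : Int mu (fun _ => c) by exact: Int_cst.
split; first exact: (IntD (IntD h1 h2) h3).
rewrite (ID (IntD h1 h2) h3) (ID h1 h2) (IZ _ (P2_S i h)) (IZ _ (P2_E i h)).
by rewrite I_cst.
Qed.

Lemma marg1 mu nu pi : coupling mu nu pi ->
  forall A, measurable A -> mu A = pi (fst @^-1` A).
Proof. by move=> [h _] A mA; rewrite h. Qed.

Lemma marg2 mu nu pi : coupling mu nu pi ->
  forall A, measurable A -> nu A = pi (snd @^-1` A).
Proof. by move=> [_ h] A mA; rewrite h. Qed.

Lemma Int1 mu nu pi (g : Rd -> R) : coupling mu nu pi -> measurable_fun setT g ->
  Int mu g -> Int pi (fun z => g z.1).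
Proof.
move=> hc mg hi; apply/(Int_transfer (phi := fst) (m2 := mu)) => //.
exact: marg1 hc.
Qed.

Lemma I1 mu nu pi (g : Rd -> R) : coupling mu nu pi -> measurable_fun setT g ->
  Int mu g -> I pi (fun z => g z.1) = I mu g.
Proof.
move=> hc mg hi; rewrite (I_transfer (m1 := pi) (m2 := mu) (phi := fst)) //.
- exact: marg1 hc.
- by apply/(Int_transfer (phi := fst) (m2 := mu)) => //; exact: marg1 hc.
Qed.

Lemma Int2 mu nu pi (g : Rd -> R) : coupling mu nu pi -> measurable_fun setT g ->
  Int nu g -> Int pi (fun z => g z.2).
Proof.
move=> hc mg hi; apply/(Int_transfer (phi := snd) (m2 := nu)) => //.
exact: marg2 hc.
Qed.

Lemma I2 mu nu pi (g : Rd -> R) : coupling mu nu pi -> measurable_fun setT g ->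
  Int nu g -> I pi (fun z => g z.2) = I nu g.
Proof.
move=> hc mg hi; rewrite (I_transfer (m1 := pi) (m2 := nu) (phi := snd)) //.
- exact: marg2 hc.
- by apply/(Int_transfer (phi := snd) (m2 := nu)) => //; exact: marg2 hc.
Qed.

Lemma C_Int mu nu pi i : coupling mu nu pi -> P2 mu -> P2 nu ->
  Int pi (fun z : Rd * Rd => tnth z.1 i * tnth z.2 i).
Proof.
move=> hc h1 h2.
have hg : Int pi (fun z : Rd * Rd => sqnorm z.1 + sqnorm z.2).
  apply: IntD; first exact: (Int1 hc msqnorm (P2_Int h1)).
  exact: (Int2 hc msqnorm (P2_Int h2)).
have hm : measurable_fun setT (fun z : Rd * Rd => tnth z.1 i * tnth z.2 i).
  by apply: measurable_funM; [exact: mtn1|exact: mtn2].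
apply: (Int_le hm _ hg).
- move=> z; have := sq_le_sqnorm z.1 i; have := sq_le_sqnorm z.2 i.
  move: (tnth z.1 i) (tnth z.2 i) => a b.
  rewrite normrM.
  have : `|a| ^+ 2 = a ^+ 2 by rewrite real_normK // num_real.
  have : `|b| ^+ 2 = b ^+ 2 by rewrite real_normK // num_real.
  have : 0 <= `|a| by [].
  have : 0 <= `|b| by [].
  move: `|a| `|b| => p q; nra.
Qed.

Lemma corrE mu nu pi : coupling mu nu pi -> P2 mu -> P2 nu ->
  corr pi = (\sum_(i < n) C pi i)%:E.
Proof.
move=> hc h1 h2.
have hi : forall i, Int pi (fun z : Rd * Rd => tnth z.1 i * tnth z.2 i).
  by move=> i; exact: C_Int hc h1 h2.
rewrite /corr /dotv.
rewrite (IntE (f := fun z : Rd * Rd => \sum_(i < n) tnth z.1 i * tnth z.2 i)).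
  by rewrite I_sum.
exact: Int_sum.
Qed.

End mom.

Section var.
Context {R : realType} {n : nat}.
Notation Rd := (n.-tuple R).
Implicit Types (mu nu : probability Rd R) (pi : probability (Rd * Rd)%type R).

Lemma tnth_mean mu i : tnth (mean mu) i = E mu i.
Proof. by rewrite tnth_mktuple. Qed.

Lemma dev mu i c : P2 mu ->
  Int mu (fun x : Rd => (tnth x i - c) ^+ 2) /\
  I mu (fun x : Rd => (tnth x i - c) ^+ 2) = S mu i - 2 * c * E mu i + c ^+ 2.
Proof.
move=> h; have [h1 h2] := quad i 1 (- (2 * c)) (c ^+ 2) h.
have -> : (fun x : Rd => (tnth x i - c) ^+ 2) =
   (fun x : Rd => 1 * tnth x i ^+ 2 + - (2 * c) * tnth x i + c ^+ 2).
  by apply: funext => x; ring.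
by split => //; rewrite h2; ring.
Qed.

Definition varint mu (x : Rd) := \sum_(i < n) (tnth x i - E mu i) ^+ 2.

Lemma varint_Int mu : P2 mu -> Int mu (varint mu).
Proof. by move=> h; apply: Int_sum => i; case: (dev i (E mu i) h). Qed.

Lemma varint_I mu : P2 mu -> I mu (varint mu) = VarR mu.
Proof.
move=> h; rewrite /varint I_sum; last by move=> i; case: (dev i (E mu i) h).
apply: eq_bigr => i _; case: (dev i (E mu i) h) => _ ->; ring.
Qed.

Lemma VarE mu : P2 mu -> Var mu = (VarR mu)%:E.
Proof.
move=> h; rewrite -varint_I // -IntE; last exact: varint_Int.
rewrite /Var; congr (integral _ _ _); apply: funext => x.
by congr EFin; apply: eq_bigr => i _; rewrite tnth_mean.
Qed.

Lemma VarR_ge0 mu : P2 mu -> 0 <= VarR mu.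
Proof.
move=> h; rewrite -varint_I //; apply: I_ge0 => x.
by apply: sumr_ge0 => i _; exact: sqr_ge0.
Qed.

Lemma mean0E nu : mean nu = [tuple (0 : R) | _ < n] -> forall i, E nu i = 0.
Proof. by move=> h i; rewrite -tnth_mean h tnth_mktuple. Qed.

End var.

Section aff.
Context {R : realType} {n : nat}.
Notation Rd := (n.-tuple R).
Variable mu : probability Rd R.
Hypothesis hmu : P2 mu.
Variable f : {mfun Rd >-> Rd}.
Variables (l : R) (k : Rd).
Hypothesis hf : forall x i, tnth (f x) i = l * tnth x i + tnth k i.

Lemma aff_hm : forall A, measurable A ->
  distribution mu f A = mu (f @^-1` A).
Proof. by []. Qed.

Lemma aff_coord i : (fun x : Rd => tnth (f x) i) =
  (fun x : Rd => 0 * tnth x i ^+ 2 + l * tnth x i + tnth k i).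
Proof. by apply: funext => x; rewrite hf; ring. Qed.

Lemma aff_coord2 i : (fun x : Rd => tnth (f x) i ^+ 2) =
  (fun x : Rd => l ^+ 2 * tnth x i ^+ 2 + 2 * l * tnth k i * tnth x i + tnth k i ^+ 2).
Proof. by apply: funext => x; rewrite hf; ring. Qed.

Lemma aff_E i : E (distribution mu f) i = l * E mu i + tnth k i.
Proof.
have [h1 h2] := quad i 0 l (tnth k i) hmu.
rewrite /E (I_transfer (m1 := mu) (phi := f)) //; last first.
  by rewrite /comp aff_coord.
  exact: mtn.
by rewrite /comp aff_coord h2 mul0r add0r.
Qed.

Lemma aff_S i : S (distribution mu f) i =
  l ^+ 2 * S mu i + 2 * l * tnth k i * E mu i + tnth k i ^+ 2.
Proof.
have [h1 h2] := quad i (l ^+ 2) (2 * l * tnth k i) (tnth k i ^+ 2) hmu.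
rewrite /S (I_transfer (m1 := mu) (phi := f)) //; last first.
  by rewrite /comp aff_coord2.
  by apply: measurable_funX; exact: mtn.
by rewrite /comp aff_coord2 h2.
Qed.

Lemma aff_P2 : P2 (distribution mu f).
Proof.
have hi : Int (distribution mu f) sqnorm.
  apply/(Int_transfer (m1 := mu) (phi := f)) => //; first exact: msqnorm.
  rewrite (_ : _ \o _ = fun x => \sum_(i < n) tnth (f x) i ^+ 2); last first.
    by apply: funext => x; rewrite /comp sqnormE.
  apply: Int_sum => i; rewrite aff_coord2.
  by case: (quad i (l ^+ 2) (2 * l * tnth k i) (tnth k i ^+ 2) hmu).
exact: integrable_lty hi.
Qed.

Lemma aff_Var : VarR (distribution mu f) = l ^+ 2 * VarR mu.
Proof.
rewrite /VarR mulr_sumr; apply: eq_bigr => i _.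
rewrite aff_S aff_E; ring.
Qed.

End aff.

Section cpl.
Context {R : realType} {n : nat}.
Notation Rd := (n.-tuple R).
Variables (mu nu : probability Rd R) (pi : probability (Rd * Rd)%type R).
Hypotheses (hc : coupling mu nu pi) (hmu : P2 mu) (hnu : P2 nu).
Hypothesis hnu0 : forall i, E nu i = 0.
Variable f : {mfun Rd >-> Rd}.
Variables (l : R) (k : Rd).
Hypothesis hf : forall x i, tnth (f x) i = l * tnth x i + tnth k i.

Lemma cpl_coupling : coupling (distribution mu f) nu (distribution pi (lift1 f)).
Proof.
split => A mA.
  exact: hc.1 (f @^-1` A) (measurable_funPTI f mA).
exact: hc.2 A mA.
Qed.

Lemma cpl_C i : C (distribution pi (lift1 f)) i = l * C pi i.
Proof.
have e : (fun z : Rd * Rd => tnth z.1 i * tnth z.2 i) \o lift1 f =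
  (fun z : Rd * Rd => l * (tnth z.1 i * tnth z.2 i) + tnth k i * tnth z.2 i).
  by apply: funext => z; rewrite /comp /lift1 /= hf; ring.
have h1 := IntZ l (C_Int i hc hmu hnu).
have h2 := IntZ (tnth k i) (Int2 hc (mtn i) (P2_E i hnu)).
rewrite /C (I_transfer (m1 := pi) (phi := lift1 f)) //; last first.
  by rewrite e; exact: (IntD h1 h2).
  by apply: measurable_funM; [exact: mtn1|exact: mtn2].
rewrite e (ID h1 h2) (IZ _ (C_Int i hc hmu hnu)).
rewrite (IZ _ (Int2 hc (mtn i) (P2_E i hnu))).
rewrite (I2 hc (mtn i) (P2_E i hnu)).
by have := hnu0 i; rewrite /E => ->; rewrite mulr0 addr0.
Qed.

Lemma cpl_sumC : \sum_(i < n) C (distribution pi (lift1 f)) i =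
  l * \sum_(i < n) C pi i.
Proof. by rewrite mulr_sumr; apply: eq_bigr => i _; exact: cpl_C. Qed.

End cpl.

Section kdom.
Context {R : realType} {n : nat}.
Notation Rd := (n.-tuple R).
Variables (mu nu : probability Rd R).
Hypotheses (hmu : P2 mu) (hnu : P2 nu).
Hypothesis hnu0 : forall i, E nu i = 0.

Lemma kint (pi : probability (Rd * Rd)%type R) : coupling mu nu pi ->
  (\int[pi]_z (\sum_(i < n) (tnth z.1 i - tnth (mean nu) i)
                              * (tnth z.2 i - tnth z.1 i))%:E)%E =
  (\sum_(i < n) C pi i - \sum_(i < n) S mu i)%:E.
Proof.
move=> hc.
have e : (fun z : Rd * Rd => (\sum_(i < n) (tnth z.1 i - tnth (mean nu) i)
                              * (tnth z.2 i - tnth z.1 i))%:E) =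
  (fun z : Rd * Rd => (\sum_(i < n) (tnth z.1 i * tnth z.2 i - tnth z.1 i ^+ 2))%:E).
  apply: funext => z; congr EFin; apply: eq_bigr => i _.
  by rewrite tnth_mean hnu0; ring.
have hs : forall i, Int pi (fun z : Rd * Rd => tnth z.1 i ^+ 2).
  move=> i; apply: (Int1 (g := fun x : Rd => tnth x i ^+ 2) hc).
    by apply: measurable_funX; exact: mtn.
  exact: P2_S.
have hi : forall i, Int pi (fun z : Rd * Rd => tnth z.1 i * tnth z.2 i - tnth z.1 i ^+ 2).
  by move=> i; exact: (IntB (C_Int i hc hmu hnu) (hs i)).
rewrite e (IntE (Int_sum hi)) I_sum // -sumrB; congr EFin.
apply: eq_bigr => i _; rewrite (IB (C_Int i hc hmu hnu) (hs i)).
congr (_ - _).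
apply: (I1 (g := fun x : Rd => tnth x i ^+ 2) hc).
  by apply: measurable_funX; exact: mtn.
exact: P2_S.
Qed.

Lemma KdomI (pi : probability (Rd * Rd)%type R) : coupling mu nu pi ->
  \sum_(i < n) C pi i = \sum_(i < n) S mu i -> Kdom mu nu.
Proof.
move=> hc he; exists pi; split => //.
by rewrite kint // he subrr.
Qed.

Lemma KdomE : Kdom mu nu -> exists pi, coupling mu nu pi /\
  \sum_(i < n) C pi i = \sum_(i < n) S mu i.
Proof.
move=> [pi [hc he]]; exists pi; split => //.
by move: he; rewrite kint // => h; apply/eqP; rewrite -subr_eq0 -(eqe (R := R)); exact/eqP.
Qed.

End kdom.

Section deg.
Context {R : realType} {n : nat}.
Notation Rd := (n.-tuple R).
Variables (mu nu : probability Rd R) (pi : probability (Rd * Rd)%type R).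
Hypotheses (hc : coupling mu nu pi) (hmu : P2 mu) (hnu : P2 nu).
Hypothesis hnu0 : forall i, E nu i = 0.
Variable a : Rd.
Hypothesis h0 : I mu (fun x : Rd => \sum_(i < n) (tnth x i - tnth a i) ^+ 2) = 0.

Lemma deg : \sum_(i < n) C pi i = 0.
Proof.
pose g := fun x : Rd => \sum_(i < n) (tnth x i - tnth a i) ^+ 2.
have gi : Int mu g by apply: Int_sum => i; case: (dev i (tnth a i) hmu).
have mg : measurable_fun setT g by exact: Int_meas gi.
have g0 : forall x, 0 <= g x by move=> x; apply: sumr_ge0 => i _; exact: sqr_ge0.
have : (\int[mu]_x `|(EFin \o g) x| = 0)%E.
  rewrite (eq_integral (fun x => (g x)%:E)); last first.
    by move=> x _ /=; rewrite ?abse_EFin ger0_norm.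
  by rewrite IntE // h0.
move/(ae_eq_integral_abs mu measurableT (f := EFin \o g)).
move=> /(_ (proj2 (measurable_EFinP _ _) mg)).
case=> N /= [mN N0 sN].
have key : forall x : Rd, ~ N x -> x = a.
  move=> x Nx; apply: eq_from_tnth => i.
  have gx : g x = 0.
    apply: contrapT => gx; apply: Nx; apply: sN => /= hx.
    by apply: gx; move: (hx Logic.I) => [].
  have := psumr_eq0P (P := predT) (fun j _ => sqr_ge0 (tnth x j - tnth a j)) gx.
  by move=> /(_ i isT) /eqP; rewrite sqrf_eq0 subr_eq0 => /eqP.
have hae : ae_eq pi setT (fun z : Rd * Rd => (dotv z.1 z.2)%:E)
    (fun z : Rd * Rd => (\sum_(i < n) tnth a i * tnth z.2 i)%:E).
  exists (fst @^-1` N); split.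
  - by rewrite -[X in measurable X]setTI; exact: measurable_fst.
  - by transitivity (mu N); [symmetry; exact: marg1 hc N mN | exact: N0].
  - move=> z /= hz; apply: contrapT => Nz; apply: hz => _.
    by rewrite /dotv (key _ Nz).
have hI : forall i, Int pi (fun z : Rd * Rd => tnth a i * tnth z.2 i).
  by move=> i; exact: (IntZ (tnth a i) (Int2 hc (mtn i) (P2_E i hnu))).
apply: EFin_inj; rewrite -(corrE hc hmu hnu) /corr.
rewrite (ae_eq_integral (fun z : Rd * Rd => (\sum_(i < n) tnth a i * tnth z.2 i)%:E)) //.
- rewrite (IntE (Int_sum hI)) I_sum //; congr EFin.
  apply: big1 => i _; rewrite (IZ _ (Int2 hc (mtn i) (P2_E i hnu))).
  by rewrite (I2 hc (mtn i) (P2_E i hnu)); have := hnu0 i; rewrite /E => ->; rewrite mulr0.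
- by apply/measurable_EFinP; exact: mdot.
- by apply/measurable_EFinP; exact: (Int_meas (Int_sum hI)).
Qed.

End deg.

Section dil.
Context {R : realType} {n : nat}.
Notation Rd := (n.-tuple R).
Variable D : set (probability Rd R).
Hypotheses (hcone : is_cone D) (hDP2 : forall mu, D mu -> P2 mu).
Variables (mu nu : probability Rd R) (pi : probability (Rd * Rd)%type R).
Hypotheses (hD : D mu) (hc : coupling mu nu pi) (hnu : P2 nu).
Hypothesis hnu0 : forall i, E nu i = 0.
Variable l : R.
Hypotheses (hl : 0 <= l) (hlc : l * \sum_(i < n) S mu i = \sum_(i < n) C pi i).

Lemma dil : exists mu2, D mu2 /\ MK nu mu2 /\ Var mu2 = (l ^+ 2 * VarR mu)%:E.
Proof.
have hmu := hDP2 hD.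
pose f : {mfun Rd >-> Rd} := [mfun of @dilate R n l].
pose k : Rd := [tuple (0 : R) | _ < n].
have hf : forall x i, tnth (f x) i = l * tnth x i + tnth k i.
  by move=> x i; rewrite /f /= !tnth_mktuple addr0.
exists (distribution mu f); split; last split.
- by apply: (hcone hD hl) => A mA.
- split; first exact: aff_P2.
  apply: (KdomI (aff_P2 hmu hf) hnu hnu0 (cpl_coupling hc f)).
  rewrite (cpl_sumC hc hmu hnu hnu0 hf) -hlc mulrA -expr2 mulr_sumr.
  apply: eq_bigr => i _; rewrite (aff_S hmu hf) tnth_mktuple; ring.
- by rewrite VarE ?(aff_Var hmu hf) //; exact: aff_P2.
Qed.

End dil.

Theorem mainTheorem13 (R : realType) (n : nat)
    (nu : probability (n.-tuple R) R)
    (D : set (probability (n.-tuple R) R)) :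
  P2 nu -> mean nu = [tuple (0 : R) | _ < n] ->
  (forall mu, D mu -> P2 mu) -> is_cone D ->
  forall mus : probability (n.-tuple R) R,
    D mus -> MK nu mus ->
    (forall mu, D mu -> MK nu mu -> (Var mu <= Var mus)%E) ->
    (forall pis : probability (n.-tuple R * n.-tuple R)%type R,
       coupling mus nu pis ->
       (forall pi, coupling mus nu pi -> (corr pi <= corr pis)%E) ->
       corr pis = (\int[mus]_x (sqnorm x)%:E)%E) /\
    (transl_inv D -> mean mus = [tuple (0 : R) | _ < n]).
Proof.
move=> hnu hmean hDP2 hcone mus hD [hmus hK] hmax.
have hnu0 := mean0E hmean.
have [piK [hcK hcKe]] := KdomE hmus hnu hnu0 hK.
set m := \sum_(i < n) S mus i in hcKe.
have m_ge0 : 0 <= m by apply: sumr_ge0 => i _; exact: S_ge0.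
have hV0 := VarR_ge0 hmus.
have varzero : forall pi, coupling mus nu pi -> VarR mus = 0 ->
    \sum_(i < n) C pi i = 0.
  move=> pi hc hV; apply: (deg hc hmus hnu hnu0 (a := mean mus)).
  transitivity (I mus (varint mus)); last by rewrite varint_I.
  congr (I _ _); apply: funext => x.
  by rewrite /varint; apply: eq_bigr => i _; rewrite tnth_mean.
have mzero : forall pi, coupling mus nu pi -> m = 0 -> \sum_(i < n) C pi i = 0.
  move=> pi hc hm; apply: (deg hc hmus hnu hnu0 (a := [tuple (0 : R) | _ < n])).
  transitivity (I mus sqnorm); last by rewrite m2_sum.
  congr (I _ _); apply: funext => x.
  by rewrite sqnormE; apply: eq_bigr => i _; rewrite tnth_mktuple subr0.
have hVmus : Var mus = (VarR mus)%:E by exact: VarE.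
split.
- move=> pis hcs hopt.
  rewrite (corrE hcs hmus hnu) (IntE (P2_Int hmus)) (m2_sum hmus).
  congr EFin; rewrite -/m.
  set c := \sum_(i < n) C pis i.
  have hKc : m <= c.
    have := hopt piK hcK; rewrite (corrE hcK hmus hnu) (corrE hcs hmus hnu).
    by rewrite lee_fin hcKe.
  apply/eqP; rewrite eq_le hKc andbT; rewrite leNgt; apply/negP => hmc.
  have [m0|mpos] := eqVneq m 0.
    by move: hmc; rewrite /c (mzero _ hcs m0) m0 ltxx.
  have mgt0 : 0 < m by rewrite lt0r mpos.
  pose l := c / m.
  have hl : 0 <= l by rewrite /l divr_ge0 // (le_trans m_ge0).
  have hlc : l * \sum_(i < n) S mus i = c by rewrite /l -/m divfK.
  have [mu2 [hD2 [hMK2 hV2]]] := dil hcone hDP2 hD hcs hnu hnu0 hl hlc.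
  have := hmax mu2 hD2 hMK2; rewrite hV2 hVmus lee_fin => hle.
  have l1 : 1 < l by rewrite /l ltr_pdivlMr // mul1r.
  have V0 : VarR mus = 0.
    apply/eqP; rewrite eq_le hV0 andbT.
    have l2 : 1 < l ^+ 2 by rewrite expr2; nra.
    move: hle l2 hV0; move: (VarR mus) (l ^+ 2) => V L; nra.
  by move: hmc; rewrite /c (varzero _ hcs V0) => hmc; move: (lt_trans mgt0 hmc); rewrite ltxx.
- move=> htr.
  pose B := \sum_(i < n) E mus i ^+ 2.
  suff B0 : B = 0.
    apply: eq_from_tnth => i; rewrite tnth_mean tnth_mktuple.
    have := psumr_eq0P (P := predT) (fun j _ => sqr_ge0 (E mus j)) B0.
    by move=> /(_ i isT) /eqP; rewrite sqrf_eq0 => /eqP.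
  have B_ge0 : 0 <= B by apply: sumr_ge0 => i _; exact: sqr_ge0.
  apply/eqP; rewrite eq_le B_ge0 andbT leNgt; apply/negP => Bpos.
  pose k : n.-tuple R := [tuple - E mus i | i < n].
  pose f : {mfun n.-tuple R >-> n.-tuple R} := [mfun of @translate R n k].
  have hf : forall x i, tnth (f x) i = 1 * tnth x i + tnth k i.
    by move=> x i; rewrite /f /= tnth_mktuple mul1r.
  have hD1 : D (distribution mus f) by apply: (htr _ _ k hD) => A mA.
  have hP1 := aff_P2 hmus hf.
  have hc1 := cpl_coupling hcK f.
  have hC1 := cpl_sumC hcK hmus hnu hnu0 hf.
  have mVB : m = VarR mus + B.
    by rewrite /VarR /B /m sumrB subrK.
  have hS1 : \sum_(i < n) S (distribution mus f) i = VarR mus.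
    rewrite /VarR; apply: eq_bigr => i _; rewrite (aff_S hmus hf) tnth_mktuple.
    rewrite /E; ring.
  have [V0|Vpos] := eqVneq (VarR mus) 0.
    have := varzero _ hcK V0; rewrite hcKe mVB V0 add0r => B0.
    by move: Bpos; rewrite B0 ltxx.
  have Vgt0 : 0 < VarR mus by rewrite lt0r Vpos.
  pose l := m / VarR mus.
  have hl : 0 <= l by rewrite /l divr_ge0.
  have hlc : l * \sum_(i < n) S (distribution mus f) i =
             \sum_(i < n) C (distribution piK (lift1 f)) i.
    by rewrite hS1 /l divfK // hC1 mul1r hcKe.
  have [mu2 [hD2 [hMK2 hV2]]] := dil hcone hDP2 hD1 hc1 hnu hnu0 hl hlc.
  have := hmax mu2 hD2 hMK2; rewrite hV2 hVmus lee_fin (aff_Var hmus hf) => hle.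
  have l1 : 1 < l by rewrite /l ltr_pdivlMr // mul1r mVB ltrDl.
  have l2 : 1 < l ^+ 2 by rewrite expr2; nra.
  move: hle l2 Vgt0; move: (VarR mus) (l ^+ 2) => V L; nra.
Qed.
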